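(* Let $B\in\mathbb{R}^{n\times n}$ be a nonsingular $M$-matrix and $C\in\mathbb{R}^{n\times n}$ an $M$-matrix such that $B^{-1}C\ge 0$, and suppose that $B-C-I$ is a nonsingular $M$-matrix. Let $\Phi$ be the maximal nonpositive solvent of $X^2+BX+C=0$ and $\Psi$ the maximal nonpositive solvent of the dual equation $CY^2+BY+I=0$. Set $X_0=E_0=-B^{-1}C$ and $Y_0=F_0=-B^{-1}$, and for $i=0,1,2,\dots$ define $E_{i+1}=E_i(I-Y_iX_i)^{-1}E_i$, $F_{i+1}=F_i(I-X_iY_i)^{-1}F_i$, $X_{i+1}=X_i+F_i(I-X_iY_i)^{-1}X_iE_i$, $Y_{i+1}=Y_i+E_i(I-Y_iX_i)^{-1}Y_iF_i$. Then these sequences are well-defined (all inverses exist), and for every $k\ge 1$: (a) $E_k=(I-Y_k\Phi)\Phi^{2^k}\ge 0$; (b) $F_k=(I-X_k\Psi)\Psi^{2^k}\ge 0$; (c) $I-X_kY_k$ and $I-Y_kX_k$ are nonsingular $M$-matrices; (d) $\Phi\le X_k\le X_{k-1}\le 0$, $\Psi\le Y_k\le Y_{k-1}\le 0$, and $0\le X_k-\Phi\le \Psi^{2^k}(-\Phi)\Phi^{2^k}$, $0\le Y_k-\Psi\le \Phi^{2^k}(-\Psi)\Psi^{2^k}$.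
   Context: Inequalities between matrices are entrywise; a matrix is nonpositive if all its entries are $\le 0$. A solvent of a matrix equation is a matrix solution; the maximal nonpositive solvent is a nonpositive solvent $\Phi$ with $X\le\Phi$ entrywise for every nonpositive solvent $X$ (these exist for both equations under the stated hypotheses). A $Z$-matrix is a real square matrix with nonpositive off-diagonal entries; a $Z$-matrix $A=sI-N$ with $N\ge 0$ is an $M$-matrix if $s\ge\rho(N)$ and a nonsingular $M$-matrix if $s>\rho(N)$, where $\rho$ is the spectral radius. *)

(* Defs.v *)
From HB Require Import structures.
From mathcomp Require Import all_boot all_order all_algebra.
From mathcomp.real_closed Require Import complex.
Set Implicit Arguments. Unset Strict Implicit. Unset Printing Implicit Defensive.
Import Order.TTheory GRing.Theory Num.Theory.
Local Open Scope ring_scope.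

Section Defs.
Variable (R : rcfType) (n : nat).

Definition mxle (A B : 'M[R]_n) : Prop := forall i j, A i j <= B i j.
Definition mxnonneg (A : 'M[R]_n) : Prop := mxle 0 A.

Definition eigenvalueC (N : 'M[R]_n) (l : R[i]) : Prop :=
  root (char_poly (map_mx (fun x : R => (x%:C)%C) N)) l.

Definition spectral_radius_le (N : 'M[R]_n) (s : R) : Prop :=
  forall l, eigenvalueC N l -> `|l| <= (s%:C)%C.
Definition spectral_radius_lt (N : 'M[R]_n) (s : R) : Prop :=
  forall l, eigenvalueC N l -> `|l| < (s%:C)%C.

Definition Mmatrix (A : 'M[R]_n) : Prop :=
  exists (s : R) (N : 'M[R]_n), A = s%:M - N /\ mxnonneg N /\ spectral_radius_le N s.
Definition nsMmatrix (A : 'M[R]_n) : Prop :=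
  exists (s : R) (N : 'M[R]_n), A = s%:M - N /\ mxnonneg N /\ spectral_radius_lt N s.

Definition max_nonpos_solvent_quad (B C Phi : 'M[R]_n) : Prop :=
  [/\ Phi *m Phi + B *m Phi + C = 0, mxle Phi 0 &
      forall X : 'M[R]_n, X *m X + B *m X + C = 0 -> mxle X 0 -> mxle X Phi].

Definition max_nonpos_solvent_dual (B C Psi : 'M[R]_n) : Prop :=
  [/\ C *m (Psi *m Psi) + B *m Psi + 1%:M = 0, mxle Psi 0 &
      forall Y : 'M[R]_n, C *m (Y *m Y) + B *m Y + 1%:M = 0 -> mxle Y 0 -> mxle Y Psi].

Fixpoint sda (B C : 'M[R]_n) (k : nat) : 'M[R]_n * 'M[R]_n * 'M[R]_n * 'M[R]_n :=
  match k with
  | 0 => (- (invmx B *m C), - invmx B, - (invmx B *m C), - invmx B)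
  | k'.+1 =>
    let: (X, Y, E, F) := sda B C k' in
    (X + F *m invmx (1%:M - X *m Y) *m X *m E,
     Y + E *m invmx (1%:M - Y *m X) *m Y *m F,
     E *m invmx (1%:M - Y *m X) *m E,
     F *m invmx (1%:M - X *m Y) *m F)
  end.

Definition sdaX B C k := (sda B C k).1.1.1.
Definition sdaY B C k := (sda B C k).1.1.2.
Definition sdaE B C k := (sda B C k).1.2.
Definition sdaF B C k := (sda B C k).2.

Fixpoint mxpow (A : 'M[R]_n) (k : nat) : 'M[R]_n :=
  match k with 0 => 1%:M | k'.+1 => A *m mxpow A k' end.

End Defs.

(* Main.v *)
Require Import Defs.
From HB Require Import structures.
From mathcomp Require Import all_boot all_order all_algebra.
From mathcomp.real_closed Require Import complex.
Import Order.TTheory GRing.Theory Num.Theory.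
Local Open Scope ring_scope.
From mathcomp.real_closed Require Import polyrcf.
From mathcomp Require Import ring lra.
Import Order.TTheory GRing.Theory Num.Theory.
Set Implicit Arguments. Unset Strict Implicit.
Import ComplexField.Normc.


Section ZPV.
Variables (R : rcfType) (n : nat).

Definition Zmx (A : 'M[R]_n) := forall i j, i != j -> A i j <= 0.
Definition posv (u : 'cV[R]_n) := forall i, 0 < u i 0.

Lemma zpv_mono (A : 'M[R]_n) (u x : 'cV[R]_n) : Zmx A -> posv u -> posv (A *m u) ->
  (forall i, 0 <= (A *m x) i 0) -> forall i, 0 <= x i 0.
Proof.
move=> hZ hu hAu hAx i; rewrite leNgt; apply/negP => xi.
pose F := fun k : 'I_n => x k 0 / u k 0.
case: (@Order.TotalTheory.arg_minP _ _ _ i predT F erefl) => i0 _ hmin.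
set c := F i0 in hmin.
have hc : c < 0.
  apply: (le_lt_trans (hmin i erefl)); rewrite /F.
  by rewrite (pmulr_llt0 (x:= (u i 0)^-1)) // invr_gt0.
have hj : forall j, c * u j 0 <= x j 0.
  by move=> j; have := hmin j erefl; rewrite /F ler_pdivlMr.
have := hAx i0; rewrite !mxE.
suff : \sum_j A i0 j * x j 0 <= c * (A *m u) i0 0.
  move=> h1 h2; have : 0 <= c * (A *m u) i0 0 by apply: (le_trans h2).
  by rewrite nmulr_rge0 // leNgt hAu.
rewrite !mxE mulr_sumr; apply: ler_sum => j _; rewrite mulrCA.
case: (eqVneq j i0) => [->|hne].
  by rewrite /c /F divfK // gt_eqF.
by apply: ler_wnM2l; [apply: hZ; rewrite eq_sym | exact: hj].
Qed.


Lemma zpv (A : 'M[R]_n) (u : 'cV[R]_n) : Zmx A -> posv u -> posv (A *m u) ->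
  A \in unitmx /\ mxnonneg (invmx A).
Proof.
move=> hZ hu hAu; have hm x := @zpv_mono A u x hZ hu hAu.
have hU : A \in unitmx.
  rewrite unitmxE unitfE -det_tr; apply/negP => /det0P [v vn0 hv].
  have hx : A *m v^T = 0 by rewrite -[A]trmxK -trmx_mul hv trmx0.
  have h1 := hm v^T (fun i => ltac:(by rewrite hx mxE)).
  have h2 := hm (- v^T) (fun i => ltac:(by rewrite mulmxN hx oppr0 mxE)).
  move/eqP: vn0; apply; apply/rowP => j.
  have := h1 j; have := h2 j; rewrite !mxE => a b; apply/eqP.
  by rewrite eq_le b -oppr_ge0 a.
split=> // i j; rewrite mxE.
have := hm (col j (invmx A)) _ i; rewrite mxE; apply => k.
by rewrite colE mulmxA mulmxV // mul1mx mxE; case: (k == j).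
Qed.
End ZPV.


Section ESL.
Variables (R : rcfType) (n : nat).

Lemma normc_sum (I : Type) (r : seq I) (F : I -> R[i]) :
  normc (\sum_(i <- r) F i) <= \sum_(i <- r) normc (F i).
Proof.
apply: (big_rec2 (fun x y => normc x <= y)); first by rewrite normc0.
by move=> i y1 y2 _ h; apply: (le_trans (le_normcD _ _)); rewrite lerD2l.
Qed.

Lemma normc_real (x : R) : normc (x%:C)%C = `|x|.
Proof. by rewrite /normc /= expr0n /= addr0 sqrtr_sqr. Qed.

Lemma normc_ge0 (x : R[i]) : 0 <= normc x.
Proof. by case: x => a b; rewrite /normc sqrtr_ge0. Qed.

Lemma esl (N : 'M[R]_n) (u : 'cV[R]_n) : mxnonneg N -> posv u ->
  (forall i, (N *m u) i 0 < u i 0) -> spectral_radius_lt N 1.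
Proof.
move=> hN hu hNu l; rewrite /eigenvalueC -eigenvalue_root_char.
move=> /eigenvalueP [v hv vn0].
pose a i := normc (v 0 i).
have ha : forall i, 0 <= a i by move=> i; apply: normc_ge0.
have key : forall j, normc l * a j <= \sum_i a i * N i j.
  move=> j; have := congr1 (fun M : 'rV[R[i]]_n => M 0 j) hv; rewrite !mxE => e.
  rewrite /a -normcM -e; apply: (le_trans (normc_sum _ _)).
  apply: ler_sum => i _; rewrite normcM mxE normc_real ger0_norm //.
  by have := hN i j; rewrite mxE.
have [i0 hi0] : exists i0, 0 < a i0.
  apply/existsP; apply: contraR vn0 => /existsPn h; apply/eqP/rowP => j.
  rewrite mxE; apply: eq0_normc; have := h j; rewrite lt_def negb_and negbK.
  by rewrite ha orbF => /eqP.
pose S := \sum_i a i * u i 0.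
pose T := \sum_i a i * (N *m u) i 0.
have hS : 0 < S.
  rewrite /S (bigD1 i0) //= ltr_pwDl ?mulr_gt0 //.
  by apply: sumr_ge0 => i _; apply: mulr_ge0 => //; apply: ltW.
have hTS : T < S.
  rewrite /S /T (bigD1 i0) //= [X in _ < X](bigD1 i0) //=.
  apply: ltr_leD; first by rewrite ltr_pM2l.
  by apply: ler_sum => i _; apply: ler_wpM2l => //; apply: ltW.
have hlT : normc l * S <= T.
  rewrite /S /T mulr_sumr.
  under eq_bigr do rewrite mulrA.
  apply: (le_trans (y := \sum_j (\sum_i a i * N i j) * u j 0)).
    by apply: ler_sum => j _; apply: ler_wpM2r; [apply: ltW|apply: key].
  under eq_bigr do rewrite mulr_suml.
  rewrite exchange_big /=; apply: ler_sum => i _; rewrite mxE mulr_sumr.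
  by apply: ler_sum => j _; rewrite mulrA.
have : normc l < 1.
  by rewrite -(ltr_pM2r hS) mul1r; apply: (le_lt_trans hlT).
by rewrite -ltcR.
Qed.
End ESL.


Section Basic.
Variables (R : rcfType) (n : nat).

Lemma nonneg_mul (A B : 'M[R]_n) : mxnonneg A -> mxnonneg B -> mxnonneg (A *m B).
Proof.
move=> hA hB i j; rewrite !mxE; apply: sumr_ge0 => k _; apply: mulr_ge0.
  by have := hA i k; rewrite mxE.
by have := hB k j; rewrite mxE.
Qed.

Lemma invmxM (A B : 'M[R]_n) : A \in unitmx -> B \in unitmx ->
  invmx (A *m B) = invmx B *m invmx A.
Proof.
move=> hA hB.
have h : invmx B *m invmx A *m (A *m B) = 1%:M.
  by rewrite mulmxA -(mulmxA (invmx B)) mulVmx // mulmx1 mulVmx.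
rewrite -[invmx (A *m B)]mul1mx -h -mulmxA mulmxV ?mulmx1 // unitmx_mul hA hB.
by [].
Qed.

Lemma count_lt (P Q : pred R) (r : seq R) :
  (forall y, P y -> Q y) -> forall y, y \in r -> Q y -> ~~ P y ->
  (count P r < count Q r)%N.
Proof.
move=> hPQ y; elim: r => // a r IH; rewrite inE => /orP [/eqP ->|yr] hQ hP /=.
  rewrite hQ (negbTE hP) add0n add1n ltnS; apply: sub_count => z; exact: hPQ.
have := IH yr hQ hP; case: (boolP (P a)) => hPa; first by rewrite (hPQ _ hPa).
by rewrite add0n => h; apply: (leq_trans h); apply: leq_addl.
Qed.

Lemma seq_min (r : seq R) (P : pred R) : has P r ->
  exists z, [/\ z \in r, P z & forall y, y \in r -> P y -> z <= y].
Proof.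
elim: r => // a r IH /=; case: (boolP (P a)) => hPa /=.
  case: (boolP (has P r)) => hr.
    have [z [zr Pz zm]] := IH hr.
    case: (leP a z) => haz.
      exists a; split=> //; first by rewrite inE eqxx.
      by move=> y; rewrite inE => /orP [/eqP ->//|yr Py]; apply: (le_trans haz); apply: zm.
    exists z; split=> //; first by rewrite inE zr orbT.
    by move=> y; rewrite inE => /orP [/eqP -> _|yr Py]; [apply: ltW | apply: zm].
  exists a; split=> //; first by rewrite inE eqxx.
  move=> y; rewrite inE => /orP [/eqP ->//|yr Py].
  by move/hasPn: hr => /(_ y yr); rewrite Py.
move=> hr; have [z [zr Pz zm]] := IH hr; exists z; split=> //; first by rewrite inE zr orbT.
by move=> y; rewrite inE => /orP [/eqP ->|yr Py]; [rewrite (negbTE hPa)| apply: zm].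
Qed.

Lemma sign_pres (p : {poly R}) t1 t2 : t1 <= t2 ->
  (forall z, t1 < z -> z <= t2 -> ~~ root p z) -> 0 <= p.[t1] * p.[t2].
Proof.
move=> h12 hz; rewrite leNgt; apply/negP => hneg.
have [x hx rx] := polyrcf.poly_ivt h12 (ltW hneg).
move: hx; rewrite in_itv /= => /andP [h1 h2].
case: (eqVneq x t1) => [ex|nx].
  by move: hneg; rewrite -ex (rootP rx) mul0r ltxx.
have h1' : t1 < x by rewrite lt_def nx h1.
by move: (hz x h1' h2); rewrite rx.
Qed.

End Basic.


Section HL.
Variables (R : rcfType) (n : nat) (N : 'M[R]_n).

Definition Am (t : R) := t%:M - N.
Definition good t := Am t \in unitmx /\ mxnonneg (invmx (Am t)).

Lemma Am_eval t : map_mx (horner_eval t) (char_poly_mx N) = Am t.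
Proof.
apply/matrixP => i j; rewrite !mxE horner_evalE hornerD hornerN hornerC.
by case: (i == j); rewrite /= ?mulr1n ?mulr0n ?hornerX ?horner0.
Qed.

Lemma det_Am t : \det (Am t) = (char_poly N).[t].
Proof. by rewrite -Am_eval det_map_mx. Qed.

Lemma adj_Am t i j : \adj (Am t) i j = (\adj (char_poly_mx N) i j).[t].
Proof. by rewrite -Am_eval -map_mx_adj mxE. Qed.

Lemma rowsum_le (M : 'M[R]_n) i : mxnonneg M ->
  \sum_j M i j <= \sum_k \sum_j M k j.
Proof.
move=> hM; rewrite [X in _ <= X](bigD1 i) //= lerDl; apply: sumr_ge0 => k _.
by apply: sumr_ge0 => j _; have := hM k j; rewrite mxE.
Qed.

Lemma sum_ge0 (M : 'M[R]_n) : mxnonneg M -> 0 <= \sum_k \sum_j M k j.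
Proof.
move=> hM; apply: sumr_ge0 => k _.
by apply: sumr_ge0 => j _; have := hM k j; rewrite mxE.
Qed.

Definition onev : 'cV[R]_n := const_mx 1.

Lemma mulmx_one (M : 'M[R]_n) i : (M *m onev) i 0 = \sum_j M i j.
Proof. by rewrite mxE; apply: eq_bigr => j _; rewrite mxE mulr1. Qed.

Lemma scal_one (a : R) (M : 'M[R]_n) i : ((a%:M - M) *m onev) i 0 = a - \sum_j M i j.
Proof.
rewrite mulmx_one (eq_bigr (fun j => a *+ (i == j) - M i j)); last by move=> j _; rewrite !mxE.
rewrite sumrB; congr (_ - _); rewrite (bigD1 i) //= eqxx mulr1n big1 ?addr0 // => j.
by rewrite eq_sym => /negbTE ->.
Qed.

Hypothesis hN : mxnonneg N.

Definition T0 := 1 + \sum_k \sum_j N k j.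

Lemma F1 t : T0 <= t -> good t.
Proof.
move=> ht; apply: (@zpv _ _ _ onev).
- by move=> i j hij; rewrite !mxE (negbTE hij) mulr0n sub0r oppr_le0; have := hN i j; rewrite mxE.
- by move=> i; rewrite mxE ltr01.
move=> i; rewrite scal_one subr_gt0.
apply: (le_lt_trans (rowsum_le i hN)); apply: (lt_le_trans _ ht).
by rewrite /T0 ltrDr ltr01.
Qed.

Lemma F2 z : good z -> exists2 d, 0 < d & forall t, z - d < t -> t <= z -> good t.
Proof.
move=> [hU hR]; set Rz := invmx (Am z).
pose S := \sum_k \sum_j Rz k j.
have hS : 0 <= S by apply: sum_ge0.
exists (1 + S)^-1; first by rewrite invr_gt0 ltr_wpDr.
move=> t ht1 ht2; set e := z - t.
have he0 : 0 <= e by rewrite subr_ge0.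
have hed : e < (1 + S)^-1 by rewrite /e ltrBlDr addrC -ltrBlDr.
pose K := 1%:M - e *: Rz.
have hK : Am t = Am z *m K.
  rewrite /K mulmxBr mulmx1 -scalemxAr mulmxV // scale_scalar_mx mulr1 /Am /e.
  by apply/matrixP => i j; rewrite !mxE; case: (i == j); rewrite /= ?mulr1n ?mulr0n; ring.
have [hKU hKN] : K \in unitmx /\ mxnonneg (invmx K).
  apply: (@zpv _ _ _ onev).
  - move=> i j hij; rewrite !mxE (negbTE hij) mulr0n sub0r oppr_le0.
    by apply: mulr_ge0 => //; have := hR i j; rewrite mxE.
  - by move=> i; rewrite mxE ltr01.
  move=> i; rewrite /K scal_one subr_gt0.
  rewrite (eq_bigr (fun j => e * Rz i j)); last by move=> j _; rewrite mxE.
  rewrite -mulr_sumr; apply: (le_lt_trans (y := e * S)).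
    by apply: ler_wpM2l => //; apply: rowsum_le.
  apply: (le_lt_trans (y := (1 + S)^-1 * S)); first by apply: ler_wpM2r => //; apply: ltW.
  by rewrite mulrC ltr_pdivrMr ?ltr_wpDr // mul1r ltrDr.
split; first by rewrite hK unitmx_mul hU hKU.
by rewrite hK invmxM //; apply: nonneg_mul.
Qed.

Variable s : R.
Hypothesis hsp : spectral_radius_lt N s.

Lemma F0 t : s <= t -> Am t \in unitmx.
Proof.
move=> hst; rewrite unitmxE unitfE det_Am; apply/negP => /eqP h.
have : eigenvalueC N (t%:C)%C.
  rewrite /eigenvalueC.
  change (root (char_poly (map_mx (real_complex R) N)) (real_complex R t)).
  by rewrite -map_char_poly fmorph_root; apply/rootP.
move/hsp; change ((normc (t%:C)%C)%:C < s%:C -> False)%C.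
rewrite ltcR normc_real => h2.
by have := lt_le_trans h2 (le_trans hst (ler_norm t)); rewrite ltxx.
Qed.

Definition Gm := \adj (char_poly_mx N).
Definition Hp := char_poly N * \prod_(i < n) \prod_(j < n) (if Gm i j == 0 then 1 else Gm i j).

Lemma Hp_neq0 : Hp != 0.
Proof.
apply: mulf_neq0; first exact: monic_neq0 (char_poly_monic N).
apply/prodf_neq0 => i _; apply/prodf_neq0 => j _.
by case: ifP => [_|h]; [rewrite oner_neq0 | rewrite h].
Qed.

Lemma Hp_root z : ~~ root Hp z ->
  ~~ root (char_poly N) z /\ (forall i j, Gm i j != 0 -> ~~ root (Gm i j) z).
Proof.
rewrite /Hp rootM negb_or => /andP [h1 h2]; split=> // i j hg.
apply: contra h2 => /rootP hr; apply/rootP.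
rewrite horner_prod (bigD1 i) //= horner_prod (bigD1 j) //= (negbTE hg) hr.
by rewrite !mul0r.
Qed.

Lemma inv_entry t i j : Am t \in unitmx ->
  invmx (Am t) i j = ((char_poly N).[t])^-1 * (Gm i j).[t].
Proof. by move=> hU; rewrite /invmx hU mxE det_Am adj_Am. Qed.

Lemma F3 t1 t2 : s <= t1 -> t1 <= t2 -> good t2 ->
  (forall z, t1 < z -> z <= t2 -> ~~ root Hp z) -> good t1.
Proof.
move=> hs1 h12 [hU2 hN2] hz.
have hU1 := F0 hs1; split=> // i j; rewrite mxE inv_entry //.
case: (eqVneq t1 t2) => [e|hne].
  by have := hN2 i j; rewrite -e mxE inv_entry.
have h12s : t1 < t2 by rewrite lt_def eq_sym hne h12.
have hD := sign_pres h12 (fun z a b => proj1 (Hp_root (hz z a b))).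
have hD2 : (char_poly N).[t2] != 0.
  by have := proj1 (Hp_root (hz t2 h12s (lexx _))); apply: contra => /eqP/rootP.
have hD1 : (char_poly N).[t1] != 0.
  by have := F0 hs1; rewrite unitmxE unitfE det_Am.
case: (eqVneq (Gm i j) 0) => [->|hg]; first by rewrite horner0 mulr0.
have hg2 : (Gm i j).[t2] != 0.
  by have := (proj2 (Hp_root (hz t2 h12s (lexx _)))) i j hg; apply: contra => /eqP/rootP.
have hgs := sign_pres h12 (fun z a b => proj2 (Hp_root (hz z a b)) i j hg).
have hr2 : 0 <= ((char_poly N).[t2])^-1 * (Gm i j).[t2].
  by have := hN2 i j; rewrite mxE inv_entry.
move: hD hD2 hD1 hg2 hgs hr2.
set D1 := (char_poly N).[t1]; set D2 := (char_poly N).[t2].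
set g1 := (Gm i j).[t1]; set g2 := (Gm i j).[t2].
move=> hD hD2 hD1 hg2 hgs hr2.
have p2 : 0 < g2 * D2.
  have -> : g2 * D2 = (D2^-1 * g2) * D2 ^+ 2 by field.
  rewrite mulr_gt0 // ?exprn_even_gt0 //= lt_def hr2 andbT mulf_neq0 //.
  by rewrite invr_eq0.
have p1 : 0 <= g1 * D1.
  have e : (g1 * D1) * (g2 * D2) = (g1 * g2) * (D1 * D2) by ring.
  by rewrite -(pmulr_lge0 _ p2) e mulr_ge0 // ltW // lt_def hD andbT mulf_neq0.
have -> : D1^-1 * g1 = (g1 * D1) / (D1 ^+ 2) by field.
by rewrite divr_ge0 // sqr_ge0.
Qed.

Definition rs := roots Hp (s - 1) (T0 + 1).
Definition cnt t := count (fun z => t < z) rs.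

Lemma in_rs y : s - 1 < y -> y < T0 + 1 -> root Hp y -> y \in rs.
Proof.
by move=> h1 h2 hr; apply: root_in_roots => //; [exact: Hp_neq0 | rewrite in_itv /= h1 h2].
Qed.

Lemma good_all m : forall t, s <= t -> (cnt t <= m)%N -> good t.
Proof.
have hs1 : s - 1 < s by rewrite ltrBlDr ltrDl ltr01.
elim: m => [|m IH] t hst hc; (case: (leP T0 t) => hT; first exact: F1);
  (case: (boolP (has (fun z => t < z) rs)) => hh; last first).
- apply: (F3 hst (ltW hT) (F1 (lexx _))) => z h1 h2; apply/negP => hr.
  have hz : z \in rs.
    apply: in_rs => //; first by apply: (lt_trans hs1); apply: (le_lt_trans hst).
    by apply: (le_lt_trans h2); rewrite ltrDl ltr01.
  by move/hasPn: hh => /(_ z hz); rewrite h1.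
- by move: hc; rewrite /cnt leqn0 => /eqP hc0; move: hh; rewrite has_count hc0.
- apply: (F3 hst (ltW hT) (F1 (lexx _))) => z h1 h2; apply/negP => hr.
  have hz : z \in rs.
    apply: in_rs => //; first by apply: (lt_trans hs1); apply: (le_lt_trans hst).
    by apply: (le_lt_trans h2); rewrite ltrDl ltr01.
  by move/hasPn: hh => /(_ z hz); rewrite h1.
have [z [zr tz zmin]] := seq_min hh.
have hcz : (cnt z < cnt t)%N.
  apply: (@count_lt _ _ _ _ _ z) => //; last by rewrite ltxx.
  by move=> y /= hy; apply: (lt_trans tz).
have hsz : s <= z by apply: (le_trans hst); apply: ltW.
have [d hd hgd] := F2 (IH z hsz (leq_trans (ltnSn _) (leq_trans hcz hc))).
case: (ltP (z - d) t) => h; first by apply: hgd => //; apply: ltW.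
have hzT : z < T0 + 1 by have := roots_in zr; rewrite in_itv /= => /andP [].
pose t' := z - d / 2%:R.
have hd2 : 0 < d / 2%:R by rewrite divr_gt0 // ltr0n.
have ht' : t < t'.
  by apply: (le_lt_trans h); rewrite /t' ltrD2l ltrN2 ltr_pdivrMr ?ltr0n // ltr_pMr // ltr1n.
apply: (F3 hst (ltW ht')).
  apply: hgd; last by rewrite /t' gerBl ltW.
  by rewrite /t' ltrD2l ltrN2 ltr_pdivrMr ?ltr0n // ltr_pMr // ltr1n.
move=> y h1 h2; apply/negP => hr.
have hyr : y \in rs.
  apply: in_rs => //; first by apply: (lt_trans hs1); apply: (le_lt_trans hst).
  apply: (le_lt_trans h2); apply: (lt_trans _ hzT); rewrite /t' gtrBl //.
have := zmin y hyr h1; have : y < z.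
  by apply: (le_lt_trans h2); rewrite /t' gtrBl.
by move=> a b; have := lt_le_trans a b; rewrite ltxx.
Qed.

Lemma hl : Am s \in unitmx /\ mxnonneg (invmx (Am s)).
Proof. exact: (@good_all (cnt s) s (lexx _) (leqnn _)). Qed.

End HL.


Section Vec.
Variables (R : rcfType) (n : nat).
Implicit Types (P Q e f M : 'M[R]_n) (a b u : 'cV[R]_n).

Lemma mxEB m (A B : 'M[R]_(m, 1)) i : (A - B) i 0 = A i 0 - B i 0.
Proof. by rewrite !mxE. Qed.
Lemma mxED m (A B : 'M[R]_(m, 1)) i : (A + B) i 0 = A i 0 + B i 0.
Proof. by rewrite !mxE. Qed.

Definition vle a b := forall i, a i 0 <= b i 0.
Definition vlt a b := forall i, a i 0 < b i 0.

Lemma mono_mx M a b : mxnonneg M -> vle a b -> vle (M *m a) (M *m b).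
Proof.
move=> hM hab i; rewrite !mxE; apply: ler_sum => j _; apply: ler_wpM2l => //.
by have := hM i j; rewrite mxE.
Qed.

Lemma nonneg_vec M a : mxnonneg M -> vle 0 a -> vle 0 (M *m a).
Proof. by move=> hM ha; have := mono_mx hM ha; rewrite mulmx0. Qed.

Lemma posv_vle u : posv u -> vle 0 u.
Proof. by move=> hu i; rewrite mxE ltW. Qed.

Lemma halfstep P Q e f u : posv u -> mxnonneg P -> mxnonneg Q -> mxnonneg e -> mxnonneg f ->
  vlt (P *m u + f *m u) u -> vlt (Q *m u + e *m u) u ->
  [/\ (1%:M - P *m Q) \in unitmx, mxnonneg (invmx (1%:M - P *m Q)),
      vlt (P *m Q *m u) u &
      vlt ((P + f *m invmx (1%:M - P *m Q) *m P *m e) *m u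
           + (f *m invmx (1%:M - P *m Q) *m f) *m u) u].
Proof.
move=> hu hP hQ he hf h1 h2.
have hu0 := posv_vle hu.
have hfu := nonneg_vec hf hu0; have heu := nonneg_vec he hu0.
have hPu : vle (P *m u) u.
  by move=> i; have := h1 i; have := hfu i; rewrite mxED mxE; lra.
have hQu : vle (Q *m u) u.
  by move=> i; have := h2 i; have := heu i; rewrite mxED mxE; lra.
have hPQ : vlt (P *m Q *m u) u.
  move=> i; have := mono_mx hP hQu i; have := h1 i; have := hfu i.
  by rewrite -mulmxA mxED mxE; lra.
have [hU hM] : (1%:M - P *m Q) \in unitmx /\ mxnonneg (invmx (1%:M - P *m Q)).
  apply: (zpv (u := u)) => //.
  - move=> i j hij; rewrite !mxE (negbTE hij) mulr0n sub0r oppr_le0.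
    by have := nonneg_mul hP hQ i j; rewrite !mxE.
  - by move=> i; rewrite mulmxBl mul1mx mxEB subr_gt0 hPQ.
split=> //.
set M := invmx _.
have hev : vle (e *m u) (u - Q *m u).
  by move=> j; have := h2 j; rewrite mxEB mxED; lra.
have k1 : vle ((P *m e + f) *m u) ((1%:M - P *m Q) *m u).
  move=> i; have := mono_mx hP hev i.
  have := h1 i; rewrite mulmxDl mulmxBl mul1mx -!mulmxA mulmxBr !mxEB !mxED.
  move=> a b; lra.
have k2 := mono_mx hM k1.
rewrite /M mulKmx // in k2.
have k3 := mono_mx hf k2.
move=> i; have := h1 i; have := k3 i.
have -> : (P + f *m M *m P *m e) *m u + f *m M *m f *m u
          = P *m u + f *m (M *m ((P *m e + f) *m u)).
  by rewrite !mulmxDl !mulmxDr !mulmxA addrA.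
by rewrite !mxED; lra.
Qed.

End Vec.


Section Ident.
Variables (R : rcfType) (n : nat).

Lemma zm1 (V : zmodType) (a b c : V) : - (a - b) + (c - b) = c - a.
Proof. by rewrite opprB addrC addrA subrK. Qed.

Lemma ident (X Y E F Phi P : 'M[R]_n) :
  (1%:M - Y *m X) \in unitmx -> (1%:M - X *m Y) \in unitmx ->
  E = (1%:M - Y *m Phi) *m P -> X = Phi - F *m Phi *m P ->
  E *m invmx (1%:M - Y *m X) *m E
    = (1%:M - (Y + E *m invmx (1%:M - Y *m X) *m Y *m F) *m Phi) *m (P *m P) /\
  X + F *m invmx (1%:M - X *m Y) *m X *m E
    = Phi - F *m invmx (1%:M - X *m Y) *m F *m Phi *m (P *m P).
Proof.
move=> hK hM hE hX; set K := invmx _; set M := invmx (1%:M - X *m Y).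
have e1 : 1%:M - Y *m Phi = (1%:M - Y *m X) - Y *m F *m Phi *m P.
  by rewrite hX mulmxBr !mulmxA opprB addrA addrAC addrK.
split.
  rewrite {2}hE e1 mulmxBl mulmxBr !mulmxA -(mulmxA E K (1%:M - Y *m X)) mulVmx // mulmx1.
  rewrite !mulmxDl !mulNmx !mulmxDl !mul1mx.
  by rewrite {1}hE !mulmxBl !mul1mx ?mulmxA opprD addrA.
have key : - ((1%:M - X *m Y) *m Phi *m P) + X *m (1%:M - Y *m Phi) *m P
           = - (F *m Phi *m P *m P).
  rewrite !mulmxBr !mulmx1 !mulmxBl !mul1mx !mulmxA.
  have -> : - (F *m Phi *m P *m P) = (X - Phi) *m P.
    by rewrite hX addrAC subrr add0r mulNmx.
  by rewrite [(X - Phi) *m P]mulmxBl; apply: zm1.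
have hFP : F *m Phi *m P = F *m M *m ((1%:M - X *m Y) *m Phi *m P).
  by rewrite -!mulmxA [M *m _]mulmxA mulVmx // mul1mx.
have -> : X + F *m M *m X *m E = Phi + F *m M *m
    (- ((1%:M - X *m Y) *m Phi *m P) + X *m (1%:M - Y *m Phi) *m P).
  rewrite mulmxDr mulmxN -hFP !mulmxA.
  by rewrite -(mulmxA (F *m M *m X)) -hE {1}hX addrA.
by rewrite key mulmxN !mulmxA.
Qed.
End Ident.


Section Aux.
Variables (R : rcfType) (n : nat).
Implicit Types (A M B C : 'M[R]_n).

Lemma posrow M : M \in unitmx -> mxnonneg M -> posv (M *m onev R n).
Proof.
move=> hU hM i; rewrite mulmx_one lt_def sumr_ge0 ?andbT; last first.
  by move=> j _; have := hM i j; rewrite mxE.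
apply/negP => /eqP h0.
have hz : forall j, M i j = 0.
  move=> j; apply: (@psumr_eq0P _ _ predT (fun j => M i j)) => // k _.
  by have := hM i k; rewrite mxE.
have := congr1 (fun X : 'M[R]_n => X i i) (mulmxV hU).
rewrite !mxE eqxx big1 => [/eqP|j _]; first by rewrite eq_sym oner_eq0.
by rewrite hz mul0r.
Qed.

Lemma mxle_sub A B : mxnonneg (B - A) -> mxle A B.
Proof. by move=> h i j; have := h i j; rewrite !mxE subr_ge0. Qed.

Lemma sc2 (s : R) A M B : s * s = 1 -> (s *: A) *m M *m (s *: B) = A *m M *m B.
Proof. by move=> hs; rewrite -scalemxAr -!scalemxAl scalerA hs scale1r. Qed.

Lemma mxpowD A a b : mxpow A (a + b) = mxpow A a *m mxpow A b.
Proof. by elim: a => [|a IH] /=; rewrite ?mul1mx // IH mulmxA. Qed.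

Lemma mxpow2 A k : mxpow A (2 ^ k.+1) = mxpow A (2 ^ k) *m mxpow A (2 ^ k).
Proof. by rewrite expnS mul2n -addnn mxpowD. Qed.

Lemma mxpow_sign A : mxnonneg (- A) -> forall j,
  mxnonneg (mxpow A (2 * j)) /\ mxnonneg (- mxpow A (2 * j).+1).
Proof.
move=> hA; elim=> [|j [IH1 IH2]].
  rewrite muln0 /= mulmx1; split=> // i k; rewrite !mxE.
  by case: (i == k); rewrite /= ?mulr1n ?mulr0n ?ler01.
have e : (2 * j.+1 = (2 * j).+2)%N by rewrite mulnS.
rewrite e /=.
have h1 : mxnonneg (A *m (A *m mxpow A (2 * j))).
  have -> : A *m (A *m mxpow A (2 * j)) = (- A) *m (- (A *m mxpow A (2 * j))).
    by rewrite mulNmx mulmxN opprK.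
  by apply: nonneg_mul.
by split=> //; rewrite -mulNmx; apply: nonneg_mul.
Qed.

End Aux.

Section Sda.
Variables (R : rcfType) (n : nat) (B C : 'M[R]_n).

Lemma sdaXS k : sdaX B C k.+1 = sdaX B C k + sdaF B C k *m
  invmx (1%:M - sdaX B C k *m sdaY B C k) *m sdaX B C k *m sdaE B C k.
Proof. by rewrite /sdaX /sdaF /sdaE /sdaY /=; case: (sda B C k) => [[[X Y] E] F]. Qed.
Lemma sdaYS k : sdaY B C k.+1 = sdaY B C k + sdaE B C k *m
  invmx (1%:M - sdaY B C k *m sdaX B C k) *m sdaY B C k *m sdaF B C k.
Proof. by rewrite /sdaX /sdaF /sdaE /sdaY /=; case: (sda B C k) => [[[X Y] E] F]. Qed.
Lemma sdaES k : sdaE B C k.+1 = sdaE B C k *m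
  invmx (1%:M - sdaY B C k *m sdaX B C k) *m sdaE B C k.
Proof. by rewrite /sdaX /sdaF /sdaE /sdaY /=; case: (sda B C k) => [[[X Y] E] F]. Qed.
Lemma sdaFS k : sdaF B C k.+1 = sdaF B C k *m
  invmx (1%:M - sdaX B C k *m sdaY B C k) *m sdaF B C k.
Proof. by rewrite /sdaX /sdaF /sdaE /sdaY /=; case: (sda B C k) => [[[X Y] E] F]. Qed.
Lemma sda0 : [/\ sdaX B C 0 = - (invmx B *m C), sdaY B C 0 = - invmx B,
  sdaE B C 0 = - (invmx B *m C) & sdaF B C 0 = - invmx B].
Proof. by []. Qed.

End Sda.


Section Main.
Variables (R : rcfType) (n : nat) (B C Phi Psi : 'M[R]_n).

Lemma nsM_inv (A : 'M[R]_n) : nsMmatrix A -> A \in unitmx /\ mxnonneg (invmx A).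
Proof. by case=> s [N [-> [hN hs]]]; exact: (hl hN hs). Qed.

Lemma nonneg_add (X Y : 'M[R]_n) : mxnonneg X -> mxnonneg Y -> mxnonneg (X + Y).
Proof.
move=> hX hY i j; have := hX i j; have := hY i j; rewrite !mxE => a b.
exact: addr_ge0.
Qed.

Hypotheses (hB : nsMmatrix B) (hBC : mxnonneg (invmx B *m C))
  (hA : nsMmatrix (B - C - 1%:M)).

Let hBU := proj1 (nsM_inv hB).
Let hBi := proj2 (nsM_inv hB).
Let hAU := proj1 (nsM_inv hA).
Let hAi := proj2 (nsM_inv hA).

Definition uu := invmx (B - C - 1%:M) *m onev R n.

Lemma hu : posv uu.
Proof. by apply: posrow; rewrite ?unitmx_inv. Qed.

Lemma init_vlt : vlt (invmx B *m C *m uu + invmx B *m uu) uu.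
Proof.
have e0 : (B - C - 1%:M) *m uu = onev R n by rewrite /uu mulKVmx.
have e : invmx B *m onev R n = uu - (invmx B *m C *m uu + invmx B *m uu).
  rewrite -e0 !mulmxBl !mulmxBr mul1mx !mulmxA mulVmx // mul1mx opprD addrA.
  by [].
have hBiU : invmx B \in unitmx by rewrite unitmx_inv.
move=> i; have := posrow hBiU hBi i; rewrite e mxEB mxED; lra.
Qed.

Definition Inv k := exists s : R, s * s = 1 /\ ((0 < k)%N -> s = 1) /\
  mxnonneg (- sdaX B C k) /\ mxnonneg (- sdaY B C k) /\
  mxnonneg (s *: sdaE B C k) /\ mxnonneg (s *: sdaF B C k) /\
  vlt ((- sdaX B C k) *m uu + (s *: sdaF B C k) *m uu) uu /\
  vlt ((- sdaY B C k) *m uu + (s *: sdaE B C k) *m uu) uu.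

Lemma inv0 : Inv 0.
Proof.
have [eX eY eE eF] := sda0 B C.
exists (-1); rewrite mulrNN mulr1; do 2!split => //.
rewrite eX eY eE eF !scaleN1r !opprK; do 4!split => //.
split; first exact: init_vlt.
by rewrite addrC; exact: init_vlt.
Qed.

Lemma step k : Inv k ->
  [/\ (1%:M - sdaX B C k *m sdaY B C k) \in unitmx,
      (1%:M - sdaY B C k *m sdaX B C k) \in unitmx,
      vlt (sdaX B C k *m sdaY B C k *m uu) uu /\
      vlt (sdaY B C k *m sdaX B C k *m uu) uu,
      mxnonneg (sdaX B C k - sdaX B C k.+1) /\ mxnonneg (sdaY B C k - sdaY B C k.+1)
    & Inv k.+1].
Proof.
case=> s [hs [_ [hX [hY [hE [hF [h1 h2]]]]]]].
have PQ : (- sdaX B C k) *m (- sdaY B C k) = sdaX B C k *m sdaY B C k.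
  by rewrite mulNmx mulmxN opprK.
have QP : (- sdaY B C k) *m (- sdaX B C k) = sdaY B C k *m sdaX B C k.
  by rewrite mulNmx mulmxN opprK.
have [U1 M1 L1 V1] := halfstep hu hX hY hE hF h1 h2.
have [U2 M2 L2 V2] := halfstep hu hY hX hF hE h2 h1.
rewrite PQ in U1 M1 L1 V1; rewrite QP in U2 M2 L2 V2.
move: U1 M1 L1 V1 U2 M2 L2 V2.
set X := sdaX B C k; set Y := sdaY B C k; set E := sdaE B C k; set F := sdaF B C k.
move=> U1 M1 L1 V1 U2 M2 L2 V2.
have eX : - X + (s *: F) *m invmx (1%:M - X *m Y) *m (- X) *m (s *: E) = - sdaX B C k.+1.
  rewrite sdaXS -/X -/Y -/E -/F opprD; congr (_ + _).
  by rewrite mulmxN mulNmx -(mulmxA (s *: F)) sc2 // mulmxA.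
have eY : - Y + (s *: E) *m invmx (1%:M - Y *m X) *m (- Y) *m (s *: F) = - sdaY B C k.+1.
  rewrite sdaYS -/X -/Y -/E -/F opprD; congr (_ + _).
  by rewrite mulmxN mulNmx -(mulmxA (s *: E)) sc2 // mulmxA.
have eE : (s *: E) *m invmx (1%:M - Y *m X) *m (s *: E) = 1 *: sdaE B C k.+1.
  by rewrite scale1r sdaES sc2.
have eF : (s *: F) *m invmx (1%:M - X *m Y) *m (s *: F) = 1 *: sdaF B C k.+1.
  by rewrite scale1r sdaFS sc2.
rewrite eX eF in V1; rewrite eY eE in V2.
have nX : mxnonneg ((s *: F) *m invmx (1%:M - X *m Y) *m (- X) *m (s *: E)).
  by do 3!apply: nonneg_mul => //.
have nY : mxnonneg ((s *: E) *m invmx (1%:M - Y *m X) *m (- Y) *m (s *: F)).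
  by do 3!apply: nonneg_mul => //.
split=> //.
  by split; [rewrite -eX addNKr | rewrite -eY addNKr].
exists 1; rewrite mulr1; do 2!split => //.
split; first by rewrite -eX; apply: nonneg_add.
split; first by rewrite -eY; apply: nonneg_add.
split; first by rewrite -eE; do 2!apply: nonneg_mul => //.
split; first by rewrite -eF; do 2!apply: nonneg_mul => //.
by split.
Qed.

Lemma inv_all k : Inv k.
Proof. by elim: k => [|k IH]; [exact: inv0 | case: (step IH)]. Qed.

Hypotheses (hPhi : max_nonpos_solvent_quad B C Phi)
  (hPsi : max_nonpos_solvent_dual B C Psi).

Definition Ids k :=
  sdaE B C k = (1%:M - sdaY B C k *m Phi) *m mxpow Phi (2 ^ k) /\
  sdaX B C k = Phi - sdaF B C k *m Phi *m mxpow Phi (2 ^ k) /\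
  sdaF B C k = (1%:M - sdaX B C k *m Psi) *m mxpow Psi (2 ^ k) /\
  sdaY B C k = Psi - sdaE B C k *m Psi *m mxpow Psi (2 ^ k).

Lemma b1 : - (invmx B *m C) = Phi - (- invmx B) *m Phi *m Phi.
Proof.
case: hPhi => e _ _; have e' := congr1 (mulmx (invmx B)) e.
rewrite mulmx0 !mulmxDr [invmx B *m (B *m _)]mulmxA mulVmx // mul1mx in e'.
move/eqP: e'; rewrite addr_eq0 => /eqP <-.
by rewrite !mulNmx opprK -mulmxA addrC.
Qed.

Lemma b2 : - invmx B = Psi - (- (invmx B *m C)) *m Psi *m Psi.
Proof.
case: hPsi => e _ _; have e' := congr1 (mulmx (invmx B)) e.
rewrite mulmx0 !mulmxDr [invmx B *m (B *m _)]mulmxA mulVmx // mul1mx mulmx1 in e'.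
move/eqP: e'; rewrite addr_eq0 => /eqP <-.
by rewrite !mulNmx opprK !mulmxA addrC.
Qed.

Lemma ids k : Ids k.
Proof.
elim: k => [|k [hE [hX [hF hY]]]].
  have [eX eY eE eF] := sda0 B C.
  rewrite /Ids expn0 /= !mulmx1 ?eX ?eY ?eE ?eF !mulmxBl !mul1mx ?mulmxA.
  by rewrite -b1 -b2.
have [U1 U2 _ _ _] := step (inv_all k).
have [i1 i2] := ident U2 U1 hE hX.
have [i3 i4] := ident U1 U2 hF hY.
by rewrite /Ids !mxpow2 sdaES sdaXS sdaFS sdaYS.
Qed.

End Main.

Section Dpart.
Variables (R : rcfType) (n : nat).
Lemma dpart (X F Phi Psi Pm Qm : 'M[R]_n) : mxnonneg (- X) -> mxnonneg F ->
  mxnonneg (- Phi) -> mxnonneg Pm -> mxnonneg (- (Psi *m Qm)) ->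
  X = Phi - F *m Phi *m Pm -> F = (1%:M - X *m Psi) *m Qm ->
  mxnonneg (X - Phi) /\ mxle (X - Phi) (Qm *m (- Phi) *m Pm).
Proof.
move=> hX hF hPhi hP hQ eX eF.
have e1 : X - Phi = F *m (- Phi) *m Pm.
  by rewrite {1}eX addrAC subrr add0r mulmxN mulNmx.
split; first by rewrite e1; do 2!apply: nonneg_mul => //.
apply: mxle_sub; rewrite e1 -!mulmxBl.
have -> : Qm - F = (- X) *m (- (Psi *m Qm)).
  by rewrite eF mulmxBl mul1mx opprB addrC subrK mulNmx mulmxN opprK mulmxA.
by do 3!apply: nonneg_mul => //.
Qed.
End Dpart.

Unset Implicit Arguments.

Theorem theorem3p5 (R : rcfType) (n : nat) (B C Phi Psi : 'M[R]_n) :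
  nsMmatrix B -> Mmatrix C -> mxnonneg (invmx B *m C) ->
  nsMmatrix (B - C - 1%:M) ->
  max_nonpos_solvent_quad B C Phi ->
  max_nonpos_solvent_dual B C Psi ->
  (* well-definedness: all inverses in the recursion exist *)
  (forall i : nat,
      (1%:M - sdaX B C i *m sdaY B C i) \in unitmx /\
      (1%:M - sdaY B C i *m sdaX B C i) \in unitmx) /\
  (forall k : nat, (1 <= k)%N ->
    let Xk := sdaX B C k in let Yk := sdaY B C k in
    let Ek := sdaE B C k in let Fk := sdaF B C k in
    let Xk1 := sdaX B C k.-1 in let Yk1 := sdaY B C k.-1 in
    (* (a) *)
    (Ek = (1%:M - Yk *m Phi) *m mxpow Phi (2 ^ k) /\ mxnonneg Ek) /\
    (* (b) *)
    (Fk = (1%:M - Xk *m Psi) *m mxpow Psi (2 ^ k) /\ mxnonneg Fk) /\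
    (* (c) *)
    (nsMmatrix (1%:M - Xk *m Yk) /\ nsMmatrix (1%:M - Yk *m Xk)) /\
    (* (d) *)
    (mxle Phi Xk /\ mxle Xk Xk1 /\ mxle Xk1 0) /\
    (mxle Psi Yk /\ mxle Yk Yk1 /\ mxle Yk1 0) /\
    (mxnonneg (Xk - Phi) /\
       mxle (Xk - Phi) (mxpow Psi (2 ^ k) *m (- Phi) *m mxpow Phi (2 ^ k))) /\
    (mxnonneg (Yk - Psi) /\
       mxle (Yk - Psi) (mxpow Phi (2 ^ k) *m (- Psi) *m mxpow Psi (2 ^ k)))).
Proof.
move=> hB _ hBC hA hPhi hPsi.
have hinv := inv_all hB hBC hA.
split.
  by move=> i; have [U1 U2 _ _ _] := step hA (hinv i).
case=> [//|k] _; cbv zeta.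
have -> : (k.+1).-1 = k by [].
have [s [hs [hs1 [hX [hY [hE [hF _]]]]]]] := hinv k.+1.
rewrite (hs1 isT) !scale1r in hE hF.
have [U1 U2 [L1 L2] _ _] := step hA (hinv k.+1).
have [_ _ _ [dX dY] _] := step hA (hinv k).
have [s' [_ [_ [hX' [hY' _]]]]] := hinv k.
have [iE [iX [iF iY]]] := ids hB hBC hA hPhi hPsi k.+1.
have hPhi0 : mxnonneg (- Phi).
  by case: hPhi => _ h _ i j; have := h i j; rewrite !mxE oppr_ge0.
have hPsi0 : mxnonneg (- Psi).
  by case: hPsi => _ h _ i j; have := h i j; rewrite !mxE oppr_ge0.
have e2 : (2 ^ k.+1 = 2 * 2 ^ k)%N by rewrite expnS.
have [pP1 pP2] := mxpow_sign hPhi0 (2 ^ k).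
have [pQ1 pQ2] := mxpow_sign hPsi0 (2 ^ k).
rewrite -e2 in pP1 pP2 pQ1 pQ2.
have hu := hu hA.
have [d1 d2] := dpart hX hF hPhi0 pP1 pQ2 iX iF.
have [d3 d4] := dpart hY hE hPsi0 pQ1 pP2 iY iE.
split; first by [].
split; first by [].
split.
  split.
    have nXY : mxnonneg (sdaX B C k.+1 *m sdaY B C k.+1).
      by rewrite -[_ *m _]opprK -mulmxN -mulNmx; apply: nonneg_mul.
    exists 1, (sdaX B C k.+1 *m sdaY B C k.+1); split=> //; split=> //.
    exact: esl nXY hu L1.
  have nYX : mxnonneg (sdaY B C k.+1 *m sdaX B C k.+1).
    by rewrite -[_ *m _]opprK -mulmxN -mulNmx; apply: nonneg_mul.
  exists 1, (sdaY B C k.+1 *m sdaX B C k.+1); split=> //; split=> //.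
  exact: esl nYX hu L2.
split.
  split; first by apply: mxle_sub.
  split; first by apply: mxle_sub.
  by apply: mxle_sub; rewrite sub0r.
split.
  split; first by apply: mxle_sub.
  split; first by apply: mxle_sub.
  by apply: mxle_sub; rewrite sub0r.
by [].
Qed.
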